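(* Let $A\in\mathbb{R}^{n\times n}$, $B\in\mathbb{R}^{n\times m}$, $\mathcal{A}\in\{0,*\}^{n\times n}$, $\mathcal{B}\in\{0,*\}^{n\times m}$, and let $\lambda_i\in\sigma(A)$. Then $$\max_{\Delta A\in[\mathcal{A}],\,\Delta B\in[\mathcal{B}]}\operatorname{rank}[\lambda_i I-A-\Delta A,\;B+\Delta B]=n$$ if and only if there exist $J_i^R\subseteq[n]$, $J_i^C\subseteq[n+m]$ with $|J_i^R|=|J_i^C|$, and $\bar J_i^R\subseteq[n]\setminus J_i^R$, $\bar J_i^C\subseteq[n+m]\setminus J_i^C$ with $|\bar J_i^R|=|\bar J_i^C|=n-|J_i^C|$, such that the square submatrix $[\lambda_iI-A,\ B]_{J_i^R,J_i^C}$ is nonsingular and the square pattern submatrix $[\mathcal{A},\mathcal{B}]_{\bar J_i^R,\bar J_i^C}$ has full generic rank.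
   Context: For $\mathcal{M}\in\{0,*\}^{n_1\times n_2}$, $[\mathcal{M}]=\{M\in\mathbb{R}^{n_1\times n_2}: M_{ij}=0 \text{ whenever } \mathcal{M}_{ij}=0\}$; the generic rank of $\mathcal{M}$ is the maximum rank of an element of $[\mathcal{M}]$. $M_{S_1,S_2}$ denotes the submatrix with rows indexed by $S_1$ and columns by $S_2$; $[n]=\{1,\dots,n\}$. $\sigma(A)$ is the set of complex eigenvalues of $A$; ranks are over $\mathbb{C}$. *)

(* Defs.v *)
From HB Require Import structures.
From mathcomp Require Import all_boot all_order all_algebra.
From mathcomp Require Import complex.
From mathcomp Require Import reals.
Set Implicit Arguments. Unset Strict Implicit. Unset Printing Implicit Defensive.
Import Order.TTheory GRing.Theory Num.Theory.
Local Open Scope ring_scope.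

Definition toC (R : realType) (x : R) : R[i] := Complex x 0.

(* A pattern matrix in {0,*}^{p x q} is a boolean matrix: true = '*', false = 0.
   [P] = real matrices vanishing wherever the pattern is 0. *)
Definition in_pattern (R : realType) p q (P : 'M[bool]_(p, q)) (M : 'M[R]_(p, q)) :=
  forall i j, P i j = false -> M i j = 0.

Definition generic_rank_is (R : realType) p q (P : 'M[bool]_(p, q)) (r : nat) :=
  (exists M : 'M[R]_(p, q), in_pattern P M /\ \rank (map_mx (@toC R) M) = r) /\
  (forall M : 'M[R]_(p, q), in_pattern P M -> (\rank (map_mx (@toC R) M) <= r)%N).

Definition subm (T : Type) p q (S1 : {set 'I_p}) (S2 : {set 'I_q})
  (M : 'M[T]_(p, q)) : 'M[T]_(#|S1|, #|S2|) :=
  \matrix_(i, j) M (enum_val i) (enum_val j).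

Definition nonsingular (F : fieldType) a b (M : 'M[F]_(a, b)) :=
  a = b /\ \rank M = a.

(* Main.v *)
Require Import Defs.
From HB Require Import structures.
From mathcomp Require Import all_boot all_order all_algebra.
From mathcomp Require Import complex.
From mathcomp Require Import reals.
Set Implicit Arguments. Unset Strict Implicit. Unset Printing Implicit Defensive.
Import Order.TTheory GRing.Theory Num.Theory.
Local Open Scope ring_scope.

Section Masks.
Variable F : fieldType.

Lemma sum_sel p (I : {set 'I_p}) (i : 'I_p) (G : 'I_p -> F) :
  \sum_(k < #|I|) (i == enum_val k)%:R * G (enum_val k) = if i \in I then G i else 0.
Proof.
case: ifP => iI.
  rewrite (bigD1 (enum_rank_in iI i)) //= enum_rankK_in // eqxx mul1r big1 ?addr0 //.
  move=> k kn; case: eqP => [ek|]; last by rewrite mul0r.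
  have h : enum_rank_in iI (enum_val k) = k := enum_valK_in iI k.
  by move: h; rewrite -ek => h; rewrite h eqxx in kn.
apply: big1 => k _; case: eqP => [ek|]; last by rewrite mul0r.
by move: iI; rewrite ek enum_valP.
Qed.

Lemma sum_pred1 p (a : 'I_p) (G : 'I_p -> F) :
  \sum_i (i == a)%:R * G i = G a.
Proof.
rewrite (bigD1 a) //= eqxx mul1r big1 ?addr0 // => i /negbTE ->; by rewrite mul0r.
Qed.

Definition Sel p (I : {set 'I_p}) : 'M[F]_(p, #|I|) :=
  \matrix_(i, k) (i == enum_val k)%:R.

Lemma SelTSel p (I : {set 'I_p}) : (Sel I)^T *m Sel I = 1%:M.
Proof.
apply/matrixP => k l; rewrite !mxE.
under eq_bigr do rewrite !mxE.
rewrite (eq_bigr (fun i => (i == enum_val k)%:R * (enum_val k == enum_val l)%:R)).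
  by rewrite sum_pred1 (inj_eq enum_val_inj).
by move=> i _; case: eqP => [->|]; rewrite ?mul0r.
Qed.

Lemma rank_SelM p q (I : {set 'I_p}) (J : {set 'I_q}) (Y : 'M[F]_(#|I|, #|J|)) :
  \rank (Sel I *m Y *m (Sel J)^T) = \rank Y.
Proof.
apply/eqP; rewrite eqn_leq; apply/andP; split.
  by apply: leq_trans (mxrankM_maxl _ _) _; apply: mxrankM_maxr.
have eY : Y = (Sel I)^T *m (Sel I *m Y *m (Sel J)^T) *m Sel J.
  by rewrite !mulmxA SelTSel mul1mx -mulmxA SelTSel mulmx1.
rewrite {1}eY.
by apply: leq_trans (mxrankM_maxl _ _) _; apply: mxrankM_maxr.
Qed.

Lemma subm_Sel p q (I : {set 'I_p}) (J : {set 'I_q}) (X : 'M[F]_(p, q)) :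
  subm I J X = (Sel I)^T *m X *m Sel J.
Proof.
apply/matrixP => k l; rewrite !mxE.
under eq_bigr do rewrite !mxE.
under eq_bigr do under eq_bigr do rewrite !mxE.
rewrite (eq_bigr (fun j => (j == enum_val l)%:R * (\sum_j0 (j0 == enum_val k)%:R * X j0 j))).
  by rewrite sum_pred1 sum_pred1.
by move=> j _; rewrite mulrC.
Qed.

Definition dmask p (I : {set 'I_p}) : 'M[F]_p := Sel I *m (Sel I)^T.

Lemma dmaskE p (I : {set 'I_p}) : dmask I = diag_mx (\row_a (a \in I)%:R).
Proof.
apply/matrixP => a b; rewrite !mxE.
under eq_bigr do rewrite !mxE.
rewrite (sum_sel I a (fun x => (b == x)%:R)).
by rewrite eq_sym; case: (a \in I); case: (a == b) => //=.
Qed.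

Definition mask p q (I : {set 'I_p}) (J : {set 'I_q}) (X : 'M[F]_(p, q)) :=
  dmask I *m X *m dmask J.

Lemma maskE p q (I : {set 'I_p}) (J : {set 'I_q}) (X : 'M[F]_(p, q)) i j :
  mask I J X i j = if (i \in I) && (j \in J) then X i j else 0.
Proof.
rewrite /mask !dmaskE mul_mx_diag mul_diag_mx !mxE.
by case: (i \in I); case: (j \in J); rewrite ?mul1r ?mulr1 ?mul0r ?mulr0.
Qed.

Lemma rank_mask_subm p q (I : {set 'I_p}) (J : {set 'I_q}) (X : 'M[F]_(p, q)) :
  \rank (mask I J X) = \rank (subm I J X).
Proof.
by rewrite subm_Sel -rank_SelM /mask /dmask !mulmxA.
Qed.

Lemma rank_mask_row p q (I : {set 'I_p}) (J : {set 'I_q}) (X : 'M[F]_(p, q)) :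
  (\rank (mask I J X) <= #|I|)%N.
Proof. by rewrite rank_mask_subm rank_leq_row. Qed.

Lemma rank_mask_col p q (I : {set 'I_p}) (J : {set 'I_q}) (X : 'M[F]_(p, q)) :
  (\rank (mask I J X) <= #|J|)%N.
Proof. by rewrite rank_mask_subm rank_leq_col. Qed.


Lemma dmaskM p (A B : {set 'I_p}) : dmask A *m dmask B = dmask (A :&: B).
Proof.
rewrite !dmaskE mulmx_diag; apply/matrixP => a b; rewrite !mxE inE.
by case: (a \in A); case: (a \in B); rewrite ?mulr1 ?mulr0.
Qed.

Lemma dmask_tr p (A : {set 'I_p}) : (dmask A)^T = dmask A.
Proof. by rewrite dmaskE tr_diag_mx. Qed.

Lemma maskD p q (I : {set 'I_p}) (J : {set 'I_q}) (X Y : 'M[F]_(p, q)) :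
  mask I J (X + Y) = mask I J X + mask I J Y.
Proof. by rewrite /mask mulmxDr mulmxDl. Qed.

Lemma maskZ p q (I : {set 'I_p}) (J : {set 'I_q}) (c : F) (X : 'M[F]_(p, q)) :
  mask I J (c *: X) = c *: mask I J X.
Proof.
apply/matrixP => a b; rewrite maskE [RHS]mxE maskE mxE.
by case: ifP; rewrite ?mulr0.
Qed.

Lemma mask_delta p q (I : {set 'I_p}) (J : {set 'I_q}) i j :
  i \in I -> j \in J -> mask I J (delta_mx i j : 'M[F]_(p, q)) = delta_mx i j.
Proof.
move=> iI jJ; apply/matrixP => a b; rewrite maskE !mxE.
by case: eqP => [->|]; case: eqP => [->|] //=; rewrite ?iI ?jJ ?andbF ?andbT //; case: ifP.
Qed.

Lemma dmask_delta0 p q (R : {set 'I_p}) i (j : 'I_q) :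
  i \notin R -> dmask R *m (delta_mx i j : 'M[F]_(p, q)) = 0.
Proof.
move=> iR; rewrite dmaskE mul_diag_mx; apply/matrixP => a b; rewrite !mxE.
by case: eqP => [->|]; rewrite ?(negbTE iR) ?mul0r ?mulr0.
Qed.

Lemma delta_dmask0 p q (C : {set 'I_q}) (i : 'I_p) j :
  j \notin C -> (delta_mx i j : 'M[F]_(p, q)) *m dmask C = 0.
Proof.
move=> jC; rewrite dmaskE mul_mx_diag; apply/matrixP => a b; rewrite !mxE.
by case: (b =P j) => [->|]; rewrite ?(negbTE jC) ?andbF ?mul0r ?mulr0.
Qed.

Lemma dmaskD1 p (R : {set 'I_p}) i :
  i \in R -> dmask R = dmask (R :\ i) + delta_mx i i.
Proof.
move=> iR; rewrite !dmaskE; apply/matrixP => a b; rewrite !mxE in_setD1.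
case: (a =P b) => [<-|ab].
  case: (a =P i) => [->|ai]; rewrite ?iR ?eqxx //= ?addr0 ?add0r //.
rewrite !mulr0n add0r; case: (a =P i) => // ia; case: (b =P i) => // ib.
by case: ab; rewrite ia ib.
Qed.

Lemma row_dmask p q (S : {set 'I_p}) (A : 'M[F]_(p, q)) a :
  row a (dmask S *m A) = if a \in S then row a A else 0.
Proof.
rewrite dmaskE mul_diag_mx; apply/rowP => b; rewrite !mxE.
by case: (a \in S); rewrite ?mul1r ?mul0r // mxE.
Qed.

Lemma dmaskK p q (S : {set 'I_p}) (X : 'M[F]_(p, q)) (T : {set 'I_q}) :
  dmask S *m mask S T X = mask S T X.
Proof. by rewrite /mask mulmxA mulmxA dmaskM setIid. Qed.

End Masks.
Arguments Sel {F p} I. Arguments dmask {F p} I.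
Section Steps.
Variable F : fieldType.

Lemma ext_step p q (Y : 'M[F]_(p, q)) (R1 : {set 'I_p}) (C1 : {set 'I_q}) i j :
  i \notin R1 -> j \notin C1 -> \rank (mask R1 C1 Y) = #|R1| ->
  \rank (mask (i |: R1) (j |: C1) Y) = #|R1|.+1 \/
  \rank (mask (i |: R1) (j |: C1) (Y + delta_mx i j)) = #|R1|.+1.
Proof.
move=> iR jC rk.
set Z := mask (i |: R1) (j |: C1) Y.
have eZ' : mask (i |: R1) (j |: C1) (Y + delta_mx i j) = Z + delta_mx i j.
  by rewrite maskD mask_delta // setU11.
rewrite eZ'.
set U := mask R1 (j |: C1) Y.
have eU : U = dmask R1 *m Z.
  rewrite /Z /U /mask mulmxA mulmxA dmaskM.
  by rewrite (setIidPl (subsetUr _ _)).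
have eU' : U = dmask R1 *m (Z + delta_mx i j).
  by rewrite mulmxDr dmask_delta0 // addr0.
have eM : mask R1 C1 Y = U *m dmask C1.
  rewrite /U /mask -[RHS]mulmxA dmaskM.
  by rewrite (setIidPr (subsetUr _ _)).
have rU : \rank U = #|R1|.
  apply/eqP; rewrite eqn_leq rank_mask_row /= -{1}rk eM.
  exact: mxrankM_maxl.
have cU : #|i |: R1| = #|R1|.+1 by rewrite cardsU1 iR.
have rZ : (\rank Z <= #|R1|.+1)%N by rewrite -cU; exact: rank_mask_row.
have rZ' : (\rank (mask (i |: R1) (j |: C1) (Y + delta_mx i j)) <= #|R1|.+1)%N.
  by rewrite -cU; exact: rank_mask_row.
rewrite eZ' in rZ'.
have [hZ|hZ] := eqVneq (\rank Z) #|R1|.+1; first by left.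
have [hZ'|hZ'] := eqVneq (\rank (Z + delta_mx i j)%R) #|R1|.+1; first by right.
exfalso.
have sUZ : (U <= Z)%MS by rewrite eU submxMl.
have sUZ' : (U <= (Z + delta_mx i j)%R)%MS by rewrite eU' submxMl.
have sZU : (Z <= U)%MS.
  rewrite -(mxrank_leqif_sup sUZ).2 rU eqn_leq -{1}rU mxrankS //=.
  by rewrite -ltnS ltn_neqAle hZ rZ.
have sZU' : ((Z + delta_mx i j)%R <= U)%MS.
  rewrite -(mxrank_leqif_sup sUZ').2 rU eqn_leq -{1}rU mxrankS //=.
  by rewrite -ltnS ltn_neqAle hZ' rZ'.
have sd : (delta_mx i j <= U)%MS.
  have -> : delta_mx i j = ((Z + delta_mx i j) - Z)%R :> 'M[F]_(p, q).
    by rewrite addrC addKr.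
  by rewrite addmx_sub // eqmx_opp.
set e := delta_mx (0 : 'I_1) j : 'rV[F]_q.
have se : (e <= U)%MS.
  apply: submx_trans _ sd.
  by have := submxMl (delta_mx (0 : 'I_1) i) (delta_mx i j : 'M[F]_(p, q)); rewrite mul_delta_mx.
have ek : (e <= kermx (dmask C1))%MS by rewrite sub_kermx delta_dmask0.
have cap0 : \rank (U :&: kermx (dmask C1))%MS = 0%N.
  move: (mxrank_mul_ker U (dmask C1)); rewrite -eM rk rU.
  by move/eqP; rewrite -{2}[#|R1|]addn0 eqn_add2l => /eqP.
have := mxrankS (_ : (e <= U :&: kermx (dmask C1))%MS).
by rewrite sub_capmx se ek cap0 mxrank_delta => /(_ isT).
Qed.


Lemma del_step p q (W : 'M[F]_(p, q)) (R : {set 'I_p}) (C : {set 'I_q}) i j c :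
  i \in R -> j \in C ->
  \rank (mask R C (W + c *: delta_mx i j)%R) = #|R| -> \rank (mask R C W) != #|R| ->
  \rank (mask (R :\ i) (C :\ j) W) = #|R|.-1.
Proof.
move=> iR jC rX rW.
set X := mask R C (W + c *: delta_mx i j)%R.
set Wm := mask R C W.
have eX : X = (Wm + c *: delta_mx i j)%R by rewrite /X maskD maskZ mask_delta.
set Ur := mask (R :\ i) C W.
have eUr1 : Ur = dmask (R :\ i) *m Wm.
  by rewrite /Ur /Wm /mask mulmxA mulmxA dmaskM (setIidPl (subD1set _ _)).
have i0 : i \notin R :\ i by rewrite setD11.
have eUr2 : Ur = dmask (R :\ i) *m X.
  by rewrite eX mulmxDr -scalemxAr dmask_delta0 // scaler0 addr0.
have cR : #|R| = #|R :\ i|.+1 by rewrite (cardsD1 i R) iR.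
have XD : X = (Ur + delta_mx i i *m X)%R.
  by rewrite eUr2 -mulmxDl -dmaskD1 // /X dmaskK.
have rUr : \rank Ur = #|R :\ i|.
  apply/eqP; rewrite eqn_leq rank_mask_row /= -ltnS -cR -{1}rX -/X XD.
  apply: leq_trans (mxrank_add _ _) _; rewrite -addn1 leq_add2l.
  by apply: leq_trans (mxrankM_maxl _ _) _; rewrite mxrank_delta.
have sUW : (Ur <= Wm)%MS by rewrite eUr1 submxMl.
have sWU : (Wm <= Ur)%MS.
  rewrite -(mxrank_leqif_sup sUW).2 rUr eqn_leq -{1}rUr mxrankS //=.
  have := rank_mask_row R C W; rewrite -/Wm cR leq_eqVlt -cR (negbTE rW) /=.
  by rewrite cR ltnS.
set e := delta_mx (0 : 'I_1) j : 'rV[F]_q.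
have ne : ~~ (e <= Ur)%MS.
  apply/negP => se.
  have sd : (delta_mx i j <= Ur)%MS.
    apply: submx_trans _ se.
    by have := submxMl (delta_mx i (0 : 'I_1)) e; rewrite mul_delta_mx.
  have sX : (X <= Ur)%MS by rewrite eX addmx_sub // scalemx_sub.
  by have := mxrankS sX; rewrite rX rUr cR ltnn.
have eT : mask (R :\ i) (C :\ j) W = Ur *m dmask (C :\ j).
  by rewrite /Ur /mask -[RHS]mulmxA dmaskM (setIidPr (subD1set _ _)).
set K := (Ur :&: kermx (dmask (C :\ j)))%MS.
have sKU : (K <= Ur)%MS by apply: capmxSl.
have K0 : K *m dmask (C :\ j) = 0.
  by apply/eqP; rewrite -sub_kermx capmxSr.
have KC : K *m dmask C = K.
  case/submxP: sKU => D ->.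
  by rewrite -mulmxA /Ur /mask -[_ *m dmask C]mulmxA dmaskM setIid.
have sKe : (K <= e)%MS.
  have -> : K = K *m delta_mx j j.
    by rewrite -{1}KC (@dmaskD1 F _ _ _ jC) mulmxDr K0 add0r.
  have -> : (delta_mx j j : 'M[F]_q) = delta_mx j (0 : 'I_1) *m e.
    by rewrite mul_delta_mx.
  by rewrite mulmxA submxMl.
have rK : \rank K = 0%N.
  case: (posnP (\rank K)) => // rK.
  have rKe : \rank K = \rank e.
    by apply/eqP; rewrite eqn_leq mxrankS //= mxrank_delta.
  have seK : (e <= K)%MS by rewrite -(mxrank_leqif_sup sKe).2 rKe.
  by case/negP: ne; apply: submx_trans seK sKU.
move: (mxrank_mul_ker Ur (dmask (C :\ j))); rewrite -/K rK addn0 -eT rUr.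
by move=> ->; rewrite cR.
Qed.

Lemma col_select p q (V : 'M[F]_(p, q)) (R : {set 'I_p}) (C : {set 'I_q}) :
  \rank (mask R C V) = #|R| ->
  exists J : {set 'I_q}, J \subset C /\ #|J| = #|R| /\ \rank (mask R J V) = #|R|.
Proof.
move=> rk.
set A := (mask R C V)^T.
pose f := maxrankfun A.
pose J0 := [set f k | k : 'I_(\rank A)].
have cJ0 : #|J0| = #|R|.
  rewrite card_imset; last exact: maxrankfun_inj.
  by rewrite card_ord mxrank_tr.
exists (C :&: J0); split; first exact: subsetIl.
have eM : mask R (C :&: J0) V = mask R C V *m dmask J0.
  by rewrite /mask -[RHS]mulmxA dmaskM.
have lb : (#|R| <= \rank (mask R (C :&: J0) V))%N.
  rewrite eM -mxrank_tr trmx_mul dmask_tr -/A.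
  have : (rowsub f A <= dmask J0 *m A)%MS.
    apply/row_subP => k; rewrite row_rowsub.
    have <- : row (f k) (dmask J0 *m A) = row (f k) A.
      by rewrite row_dmask imset_f.
    exact: row_sub.
  move/mxrankS; apply: leq_trans.
  have := maxrowsub_free A; rewrite /row_free => /eqP ->.
  by rewrite mxrank_tr rk.
have ub : (\rank (mask R (C :&: J0) V) <= #|C :&: J0|)%N by apply: rank_mask_col.
have ub2 : (#|C :&: J0| <= #|R|)%N by rewrite -cJ0 subset_leq_card // subsetIr.
split.
  by apply/eqP; rewrite eqn_leq ub2 (leq_trans lb ub).
by apply/eqP; rewrite eqn_leq lb rank_mask_row.
Qed.

End Steps.
Section Core.
Variable F : fieldType.

Definition supp_set p q (R : {set 'I_p}) (C : {set 'I_q}) (P : 'M[F]_(p, q)) :=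
  [set x : 'I_p * 'I_q | (x.1 \in R) && (x.2 \in C) && (P x.1 x.2 != 0)].

Definition matching p q (Pi : 'M[bool]_(p, q)) (R : {set 'I_p}) (C : {set 'I_q})
  (g : 'I_p -> 'I_q) :=
  {in R &, injective g} /\ (forall a, a \in R -> g a \in C /\ Pi a (g a)).

Lemma T1_base p q (M0 : 'M[F]_(p, q)) (Pi : 'M[bool]_(p, q)) (g0 : 'I_p -> 'I_q)
  (R : {set 'I_p}) (C : {set 'I_q}) (P : 'M[F]_(p, q)) : supp_set R C P = set0 -> \rank (mask R C (M0 + P)) = #|R| ->
  exists (I : {set 'I_p}) (J : {set 'I_q}) (g : 'I_p -> 'I_q), [/\ I \subset R, J \subset C, #|J| = #|I|,
    \rank (mask I J M0) = #|I| & matching Pi (R :\: I) (C :\: J) g].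
Proof.
move=> s0 rk.
have eM : mask R C (M0 + P) = mask R C M0.
  apply/matrixP => a b; rewrite !maskE mxE.
  case: ifP => // /andP[aR bC].
  have : (a, b) \notin supp_set R C P by rewrite s0 in_set0.
  by rewrite inE /= aR bC /= negbK => /eqP ->; rewrite addr0.
rewrite eM in rk; have [J [JC [cJ rJ]]] := col_select rk.
exists R, J, g0; split => //; rewrite setDv.
by split; [move=> a b; rewrite in_set0 | move=> a; rewrite in_set0].
Qed.

Lemma T1 p q (M0 : 'M[F]_(p, q)) (Pi : 'M[bool]_(p, q)) (g0 : 'I_p -> 'I_q) k :
  forall (R : {set 'I_p}) (C : {set 'I_q}) (P : 'M[F]_(p, q)), (#|supp_set R C P| <= k)%N ->
  (forall a b, Pi a b = false -> P a b = 0) ->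
  \rank (mask R C (M0 + P)) = #|R| ->
  exists (I : {set 'I_p}) (J : {set 'I_q}) (g : 'I_p -> 'I_q), [/\ I \subset R, J \subset C, #|J| = #|I|,
    \rank (mask I J M0) = #|I| & matching Pi (R :\: I) (C :\: J) g].
Proof.
elim: k => [|k IH] R C P hk hP hr.
  have s0 : supp_set R C P = set0 by apply/cards0_eq/eqP; rewrite -leqn0.
  exact: (T1_base Pi g0 s0 hr).
have [s0|/set0Pn [[i j]]] := eqVneq (supp_set R C P) set0.
  exact: (T1_base Pi g0 s0 hr).
rewrite inE /= => /andP[/andP[iR jC] Pij].
set c := P i j.
set P' := (P - c *: delta_mx i j)%R.
have P'E a b : P' a b = if (a == i) && (b == j) then 0 else P a b.
  rewrite /P' !mxE; case: eqP => [->|]; case: eqP => [->|] //=;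
    by rewrite ?mulr1 ?subrr // mulr0 subr0.
have Piij : Pi i j.
  by case E: (Pi i j) => //; move: Pij; rewrite hP // eqxx.
have hP' : forall a b, Pi a b = false -> P' a b = 0.
  move=> a b hab; rewrite P'E hP //; case: ifP => //.
have hk' : forall (R' : {set 'I_p}) (C' : {set 'I_q}), R' \subset R -> C' \subset C ->
    (#|supp_set R' C' P'| <= k)%N.
  move=> R' C' sR sC; rewrite -ltnS; apply: leq_trans hk.
  apply: proper_card; apply/properP; split.
    apply/subsetP => [[a b]]; rewrite !inE /= P'E.
    case: ifP => //; first by rewrite eqxx andbF.
    move=> _ /andP[/andP[aR bC] ->]; rewrite andbT.
    by rewrite (subsetP sR _ aR) (subsetP sC _ bC).
  exists (i, j); first by rewrite inE /= iR jC.
  by rewrite inE /= P'E !eqxx /= andbF.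
have eP : (M0 + P = (M0 + P') + c *: delta_mx i j)%R.
  by rewrite /P' addrA subrK.
have [rk'|rk'] := eqVneq (\rank (mask R C (M0 + P'))) #|R|.
  by apply: IH rk' => //; apply: hk'.
rewrite eP in hr.
have rd := del_step iR jC hr rk'.
have cR : #|R| = #|R :\ i|.+1 by rewrite (cardsD1 i R) iR.
rewrite cR /= in rd.
have [I [J [g [sI sJ cIJ rI [ginj gin]]]]] :=
  IH (R :\ i) (C :\ j) P' (hk' _ _ (subD1set _ _) (subD1set _ _)) hP' rd.
exists I, J, (fun a => if a == i then j else g a); split.
- exact: subset_trans sI (subD1set _ _).
- exact: subset_trans sJ (subD1set _ _).
- by [].
- by [].
have sub a : a \in R :\: I -> a != i -> a \in (R :\ i) :\: I.
  by rewrite !inE => /andP[-> ->] ->.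
have jn : j \in C :\: J.
  rewrite inE jC andbT; apply/negP => /(subsetP sJ); by rewrite setD11.
split.
  move=> a b aI bI /=.
  case: (a =P i) => [ai|ai]; case: (b =P i) => [bi|bi].
  - by rewrite ai bi.
  - move=> ejg; have := (gin b (sub b bI (introN eqP bi))).1.
    by rewrite -ejg !inE eqxx /= andbF.
  - move=> ejg; have := (gin a (sub a aI (introN eqP ai))).1.
    by rewrite ejg !inE eqxx /= andbF.
  - by apply: ginj; apply: sub => //; apply/eqP.
move=> a aI; case: (a =P i) => [->|ai]; first by rewrite ?eqxx; split.
have [h1 h2] := gin a (sub a aI (introN eqP ai)).
split => //; move: h1; rewrite !inE => /andP[-> /andP[_ ->]] //.
Qed.


Definition pm p q (Cs : {set 'I_p}) (g : 'I_p -> 'I_q) : 'M[F]_(p, q) :=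
  \matrix_(a, b) ((a \in Cs) && (b == g a))%:R.

Lemma pmU1 p q (Cs : {set 'I_p}) (g : 'I_p -> 'I_q) i :
  i \notin Cs -> pm (i |: Cs) g = (pm Cs g + delta_mx i (g i))%R.
Proof.
move=> iC; apply/matrixP => a b; rewrite !mxE in_setU1.
case: (a =P i) => [->|ai] /=; first by rewrite (negbTE iC) /= add0r.
by rewrite addr0.
Qed.

Lemma pm0 p q (g : 'I_p -> 'I_q) : pm set0 g = 0.
Proof. by apply/matrixP => a b; rewrite !mxE in_set0. Qed.

Lemma T2 p q (M0 : 'M[F]_(p, q)) (I : {set 'I_p}) (J : {set 'I_q}) (g : 'I_p -> 'I_q) :
  \rank (mask I J M0) = #|I| -> forall k (I' : {set 'I_p}), #|I'| = k ->
  I :&: I' = set0 -> {in I' &, injective g} -> (forall a, a \in I' -> g a \notin J) ->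
  exists Cs : {set 'I_p}, Cs \subset I' /\
    \rank (mask (I :|: I') (J :|: g @: I') (M0 + pm Cs g)) = (#|I| + #|I'|)%N.
Proof.
move=> rk; elim => [|k IH] I' cI dis inj nJ.
  rewrite (cards0_eq cI); exists set0; split; first exact: sub0set.
  by rewrite pm0 addr0 imset0 !setU0 cards0 addn0.
have [i iI'] : exists i, i \in I' by apply/card_gt0P; rewrite cI.
set I'' := I' :\ i.
have cI'' : #|I''| = k by move: cI; rewrite (cardsD1 i I') iI' => -[].
have sI : I'' \subset I' by apply: subD1set.
have dis'' : I :&: I'' = set0.
  by apply/eqP; rewrite -subset0 -dis setIS.
have [Cs [sCs rCs]] := IH I'' cI'' dis'' (sub_in2 (subsetP sI) inj)
  (fun a aI => nJ a (subsetP sI a aI)).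
have iR1 : i \notin I :|: I''.
  rewrite in_setU setD11 orbF; apply/negP => iI.
  have h : i \in I :&: I' by rewrite inE iI.
  by rewrite dis in_set0 in h.
have jC1 : g i \notin J :|: g @: I''.
  rewrite in_setU (negbTE (nJ i iI')) /=; apply/imsetP => -[b bI gb].
  have bi : i = b by apply: inj => //; apply: (subsetP sI).
  by move: bI; rewrite -bi setD11.
have rk1 : \rank (mask (I :|: I'') (J :|: g @: I'') (M0 + pm Cs g)) = #|I :|: I''|.
  by rewrite rCs -cardsUI dis'' cards0 addn0.
have eR : i |: (I :|: I'') = I :|: I' by rewrite setUCA setD1K.
have eC : g i |: (J :|: g @: I'') = J :|: g @: I' by rewrite setUCA -imsetU1 setD1K.
have cc : #|I :|: I''|.+1 = (#|I| + #|I'|)%N.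
  have cU : #|I :|: I''| = (#|I| + #|I''|)%N by rewrite -cardsUI dis'' cards0 addn0.
  by rewrite cU (cardsD1 i I') iI' addnS.
have iCs : i \notin Cs by apply/negP => /(subsetP sCs); rewrite setD11.
case: (ext_step iR1 jC1 rk1); rewrite eR eC cc => h.
  by exists Cs; split => //; apply: subset_trans sCs sI.
exists (i |: Cs); split.
  by rewrite subUset sub1set iI' (subset_trans sCs sI).
by rewrite pmU1 // addrA.
Qed.

End Core.
Section Aux.
Variable F : fieldType.

Lemma mask_setT p q (X : 'M[F]_(p, q)) : mask setT setT X = X.
Proof. by apply/matrixP => a b; rewrite maskE !inE. Qed.

Lemma rank_mask_le p q (I : {set 'I_p}) (J : {set 'I_q}) (X : 'M[F]_(p, q)) :
  (\rank (mask I J X) <= \rank X)%N.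
Proof.
by apply: leq_trans (mxrankM_maxl _ _) _; apply: mxrankM_maxr.
Qed.

Lemma pm_pattern p q (Pi : 'M[bool]_(p, q)) (I' Cs : {set 'I_p}) (g : 'I_p -> 'I_q) :
  Cs \subset I' -> (forall a, a \in I' -> Pi a (g a)) ->
  forall a b, Pi a b = false -> pm F Cs g a b = 0.
Proof.
move=> sC hg a b hab; rewrite mxE.
case: (a \in Cs) / boolP => aC //=; case: (b =P g a) => // eb.
by move: hab; rewrite eb hg // (subsetP sC).
Qed.

Lemma lift_pattern p q (Pi : 'M[bool]_(p, q)) (I : {set 'I_p}) (J : {set 'I_q})
  (Y : 'M[F]_(#|I|, #|J|)) :
  (forall k l, Pi (enum_val k) (enum_val l) = false -> Y k l = 0) ->
  forall a b, Pi a b = false -> (Sel I *m Y *m (Sel J)^T) a b = 0.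
Proof.
move=> hY a b hab; rewrite !mxE; apply: big1 => l _; rewrite !mxE.
case: (b =P enum_val l) => [eb|]; last by rewrite mulr0.
rewrite big1 ?mul0r // => k _; rewrite !mxE.
case: (a =P enum_val k) => [ea|]; last by rewrite mul0r.
by rewrite hY ?mulr0 // -ea -eb.
Qed.

Lemma subm_SelK p q (I : {set 'I_p}) (J : {set 'I_q}) (Y : 'M[F]_(#|I|, #|J|)) :
  subm I J (Sel I *m Y *m (Sel J)^T) = Y.
Proof.
by rewrite subm_Sel !mulmxA SelTSel mul1mx -mulmxA SelTSel mulmx1.
Qed.

End Aux.

Lemma toC_map_nat (R : realType) (b : bool) : toC (b%:R : R) = b%:R.
Proof. by have tE : @toC R = real_complex R := erefl; rewrite tE rmorph_nat. Qed.

Lemma map_pm (R : realType) p q (Cs : {set 'I_p}) (g : 'I_p -> 'I_q) :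
  map_mx (@toC R) (pm R Cs g) = pm _ Cs g.
Proof. by apply/matrixP => a b; rewrite !mxE toC_map_nat. Qed.

Lemma map_Sel (R : realType) p (I : {set 'I_p}) :
  map_mx (@toC R) (Sel I) = Sel I.
Proof. by apply/matrixP => a b; rewrite !mxE toC_map_nat. Qed.

Lemma map_subm (R : realType) p q (I : {set 'I_p}) (J : {set 'I_q}) (X : 'M[R]_(p, q)) :
  map_mx (@toC R) (subm I J X) = subm I J (map_mx (@toC R) X).
Proof. by apply/matrixP => a b; rewrite !mxE. Qed.

Lemma toC0 (R : realType) : toC (0 : R) = 0.
Proof. by []. Qed.

Unset Implicit Arguments.
Theorem lemma2 (R : realType) (n m : nat) (A : 'M[R]_n) (B : 'M[R]_(n, m))
  (PA : 'M[bool]_n) (PB : 'M[bool]_(n, m)) (lam : R[i])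
  (hlam : eigenvalue (map_mx (@toC R) A) lam) :
  ((* the maximum over dA in [PA], dB in [PB] of the rank equals n *)
   (exists (dA : 'M[R]_n) (dB : 'M[R]_(n, m)),
       in_pattern PA dA /\ in_pattern PB dB /\
       \rank (row_mx (lam%:M - map_mx (@toC R) (A + dA)) (map_mx (@toC R) (B + dB)))
         = n) /\
   (forall (dA : 'M[R]_n) (dB : 'M[R]_(n, m)),
       in_pattern PA dA -> in_pattern PB dB ->
       (\rank (row_mx (lam%:M - map_mx (@toC R) (A + dA)) (map_mx (@toC R) (B + dB)))
         <= n)%N))
  <->
  (exists (JR : {set 'I_n}) (JC : {set 'I_(n + m)})
          (bJR : {set 'I_n}) (bJC : {set 'I_(n + m)}),
     #|JR| = #|JC| /\
     bJR \subset ~: JR /\ bJC \subset ~: JC /\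
     #|bJR| = (n - #|JC|)%N /\ #|bJC| = (n - #|JC|)%N /\
     nonsingular (subm JR JC (row_mx (lam%:M - map_mx (@toC R) A) (map_mx (@toC R) B))) /\
     generic_rank_is R (subm bJR bJC (row_mx PA PB)) #|bJR|).
Proof.
pose M0 := row_mx (lam%:M - map_mx (@toC R) A) (map_mx (@toC R) B).
pose Pi := row_mx PA PB.
have tE : @toC R = real_complex R := erefl.
have rowE : forall (dA : 'M[R]_n) (dB : 'M[R]_(n, m)),
    row_mx (lam%:M - map_mx (@toC R) (A + dA)) (map_mx (@toC R) (B + dB)) =
    (M0 + map_mx (@toC R) (row_mx (- dA) dB))%R.
  move=> dA dB; rewrite /M0 tE !map_mxD map_row_mx map_mxN add_row_mx.
  by rewrite opprD addrA.
have patE : forall (dA : 'M[R]_n) (dB : 'M[R]_(n, m)),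
    in_pattern PA dA -> in_pattern PB dB ->
    forall a b, Pi a b = false -> (row_mx (- dA) dB) a b = 0.
  move=> dA dB hA hB a b; case: (split_ordP b) => j ->.
    by rewrite /Pi !row_mxEl mxE => /hA ->; rewrite oppr0.
  by rewrite /Pi !row_mxEr => /hB.
pose g0 : 'I_n -> 'I_(n + m) := fun a => lshift m a.
split.
- move=> [[dA [dB [hA [hB rk]]]] _].
  rewrite rowE in rk.
  set Pc := map_mx (@toC R) (row_mx (- dA) dB).
  have hP : forall a b, Pi a b = false -> Pc a b = 0.
    by move=> a b h; rewrite mxE (patE _ _ hA hB _ _ h).
  have rk' : \rank (mask setT setT (M0 + Pc)%R) = #|[set: 'I_n]|.
    by rewrite mask_setT rk cardsT card_ord.
  have [I [J [g [_ _ cJI rI [ginj gin]]]]] := T1 g0 (leqnn _) hP rk'.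
  rewrite !setTD in ginj gin.
  exists I, J, (~: I), (g @: ~: I).
  have cI : #|~: I| = (n - #|J|)%N.
    have := cardsC I; rewrite card_ord cJI; move: #|I| #|~: I| => x y h.
    by rewrite -h addKn.
  split; first by rewrite cJI.
  split; first exact: subxx.
  split.
    by apply/subsetP => y /imsetP [a aI ->]; exact: (gin a aI).1.
  split; first exact: cI.
  split; first by rewrite card_in_imset.
  split.
    by split; [rewrite cJI | rewrite -rank_mask_subm].
  split; last by move=> M _; exact: rank_leq_row.
  have r0 : \rank (mask set0 set0 (0 : 'M[R[i]]_(n, n + m))) = #|(set0 : {set 'I_n})|.
    by rewrite /mask mulmx0 mul0mx mxrank0 cards0.
  have [Cs [sCs rCs]] := T2 r0 erefl (set0I _) ginj (fun a _ => negbT (in_set0 (g a))).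
  rewrite !set0U add0r cards0 add0n in rCs.
  exists (subm (~: I) (g @: ~: I) (pm R Cs g)); split.
    move=> k l h; rewrite /subm mxE.
    apply: (@pm_pattern R _ _ Pi _ _ _ sCs (fun a aI => (gin a aI).2)).
    by move: h; rewrite mxE.
  by rewrite map_subm map_pm -rank_mask_subm.
- move=> [JR [JC [bJR [bJC [cRC [sR [sC [cbR [cbC [[_ rns] [[Mr [hMr rMr]] _]]]]]]]]]]].
  split; last by move=> *; exact: rank_leq_row.
  set L := Sel bJR *m Mr *m (Sel bJC)^T : 'M[R]_(n, n + m).
  have hL : forall a b, Pi a b = false -> map_mx (@toC R) L a b = 0.
    move=> a b h; rewrite mxE (lift_pattern (Pi := Pi) _ h) //.
    by move=> k l hkl; apply: hMr; rewrite mxE.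
  have rL : \rank (mask bJR bJC (0 + map_mx (@toC R) L)%R) = #|bJR|.
    have mS : forall p (I : {set 'I_p}), map_mx (real_complex R) (Sel I) = Sel I.
      by move=> p I; apply/matrixP => a b; rewrite !mxE rmorph_nat.
    rewrite add0r rank_mask_subm /L tE !map_mxM -map_trmx !mS subm_SelK.
    exact: rMr.
  have [I0 [J0 [g [sI0 sJ0 cIJ0 rI0 [ginj gin]]]]] := T1 g0 (leqnn _) hL rL.
  have I00 : I0 = set0.
    by apply: cards0_eq; rewrite -rI0 /mask mulmx0 mul0mx mxrank0.
  have J00 : J0 = set0 by apply: cards0_eq; rewrite cIJ0 I00 cards0.
  rewrite I00 J00 !setD0 in ginj gin.
  have rJ : \rank (mask JR JC M0) = #|JR| by rewrite rank_mask_subm.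
  have dis : JR :&: bJR = set0.
    apply/setP => x; rewrite !inE; case xJ: (x \in JR) => //=.
    by apply/negP => xb; have := subsetP sR x xb; rewrite inE xJ.
  have nJ : forall a, a \in bJR -> g a \notin JC.
    by move=> a aI; have := subsetP sC _ (gin a aI).1; rewrite inE.
  have [Cs [sCs rCs]] := T2 rJ erefl dis ginj nJ.
  have cn : (#|JR| + #|bJR| = n)%N.
    rewrite cbR -cRC subnKC //.
    by have := max_card (mem JR); rewrite card_ord.
  have hg : forall a, a \in bJR -> Pi a (g a) by move=> a aI; exact: (gin a aI).2.
  exists (- lsubmx (pm R Cs g)), (rsubmx (pm R Cs g)).
  split.
    move=> i j h; rewrite !mxE.
    case: (i \in Cs) / boolP => iC //=; last by rewrite oppr0.
    case: eqP => [e|]; last by rewrite oppr0.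
    by move: h; have := hg i (subsetP sCs i iC); rewrite -e /Pi row_mxEl => ->.
  split.
    move=> i j h; rewrite !mxE.
    case: (i \in Cs) / boolP => iC //=.
    case: eqP => [e|] //.
    by move: h; have := hg i (subsetP sCs i iC); rewrite -e /Pi row_mxEr => ->.
  rewrite rowE opprK hsubmxK map_pm.
  apply/eqP; rewrite eqn_leq rank_leq_row /= -{1}cn -rCs.
  exact: rank_mask_le.
Qed.
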